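(* Let $q_1,q_2,q_3\in(0,1)$ with $q_1+q_2+q_3=1$. On $\mathbb{C}^6$ with basis $\{|0\rangle,\dots,|5\rangle\}$ let $\overline{L}_1=\mathbb{I}_6$, and let $\overline{L}_2$, $\overline{L}_3$, $\overline{S}_1$, $\overline{S}_2$, $\overline{S}_3$ be the permutation unitaries that swap $|0\rangle$ with $|1\rangle$, $|2\rangle$, $|3\rangle$, $|4\rangle$, $|5\rangle$ respectively and fix all other basis vectors. Define the noisy unitary channels $\overline{\mathcal{L}}(\rho)=\sum_{k=1}^3 q_k\overline{L}_k\rho\overline{L}_k^\dagger$ and $\overline{\mathcal{S}}(\rho)=\sum_{k=1}^3 q_k\overline{S}_k\rho\overline{S}_k^\dagger$. Then for discriminating $\overline{\mathcal{L}}$ and $\overline{\mathcal{S}}$, a single-system probe is better than a maximally entangled probe: there is a state $\rho$ on $\mathbb{C}^6$ such that for every maximally entangled state $|\Psi\rangle\in\mathbb{C}^6\otimes\mathbb{C}^6$, $$\tfrac12+\tfrac14\|\overline{\mathcal{L}}(\rho)-\overline{\mathcal{S}}(\rho)\|_1>\tfrac12+\tfrac14\|(\overline{\mathcal{L}}\otimes\mathrm{id})(|\Psi\rangle\langle\Psi|)-(\overline{\mathcal{S}}\otimes\mathrm{id})(|\Psi\rangle\langle\Psi|)\|_1.$$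
   Context: For two channels chosen with equal priors $1/2$, the single-shot success probability with a single-system probe $\rho$ is $\frac12+\frac14\|\mathcal{N}_1(\rho)-\mathcal{N}_2(\rho)\|_1$, and with a bipartite probe $\rho_{AB}$ (channel on $A$) it is $\frac12+\frac14\|(\mathcal{N}_1\otimes\mathrm{id})(\rho_{AB})-(\mathcal{N}_2\otimes\mathrm{id})(\rho_{AB})\|_1$; $\|\cdot\|_1$ is the trace norm. A pure state on $\mathbb{C}^6\otimes\mathbb{C}^6$ is maximally entangled if its reduced states are $\mathbb{I}_6/6$. *)

(* Defs.v *)
From HB Require Import structures.
From mathcomp Require Import all_boot all_order all_algebra.
From mathcomp Require Import fingroup perm complex mxtens.
Set Implicit Arguments. Unset Strict Implicit. Unset Printing Implicit Defensive.
Import Order.TTheory GRing.Theory Num.Theory.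
Local Open Scope ring_scope.
Local Open Scope complex_scope.

Definition adj (R : rcfType) (m n : nat) (A : 'M[R[i]]_(m, n)) : 'M[R[i]]_(n, m) :=
  map_mx (@conjc R) A^T.

Definition unitary (R : rcfType) (n : nat) (U : 'M[R[i]]_n) : Prop :=
  U *m adj U = 1%:M /\ adj U *m U = 1%:M.

Definition density (R : rcfType) (n : nat) (rho : 'M[R[i]]_n) : Prop :=
  adj rho = rho /\
  (forall v : 'cV[R[i]]_n, 0 <= (adj v *m rho *m v) 0 0) /\
  \tr rho = 1.

(* trace norm: ||A||_1 = sum of the singular values of A, i.e.
   trace_norm_is A t  iff  A = U diag(d) V with U, V unitary, d >= 0, t = sum d. *)
Definition trace_norm_is (R : rcfType) (n : nat) (A : 'M[R[i]]_n) (t : R) : Prop :=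
  exists (U V : 'M[R[i]]_n) (d : 'rV[R]_n),
    [/\ unitary U, unitary V, (forall j, 0 <= d 0 j),
        A = U *m diag_mx (map_mx (fun x : R => x%:C) d) *m V
      & t = \sum_j d 0 j].

Definition swap6 (R : rcfType) (j : 'I_6) : 'M[R[i]]_6 := perm_mx (tperm 0 j).

(* Kraus operators: Lbar_1 = I, Lbar_2 = swap(0,1), Lbar_3 = swap(0,2);
   Sbar_1 = swap(0,3), Sbar_2 = swap(0,4), Sbar_3 = swap(0,5).  k : 'I_3 indexes k = 1,2,3. *)
Definition Lbar (R : rcfType) (k : 'I_3) : 'M[R[i]]_6 := swap6 R (inord k).
Definition Sbar (R : rcfType) (k : 'I_3) : 'M[R[i]]_6 := swap6 R (inord (k + 3)).

Definition mixunitary (R : rcfType) (q : 'I_3 -> R) (K : 'I_3 -> 'M[R[i]]_6)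
  (rho : 'M[R[i]]_6) : 'M[R[i]]_6 :=
  \sum_(k < 3) (q k)%:C *: (K k *m rho *m adj (K k)).

Definition mixunitary_tens_id (R : rcfType) (q : 'I_3 -> R) (K : 'I_3 -> 'M[R[i]]_6)
  (X : 'M[R[i]]_(6 * 6)) : 'M[R[i]]_(6 * 6) :=
  \sum_(k < 3) (q k)%:C *: ((K k *t (1%:M : 'M[R[i]]_6)) *m X
                            *m adj (K k *t (1%:M : 'M[R[i]]_6))).

Definition proj (R : rcfType) (n : nat) (psi : 'cV[R[i]]_n) : 'M[R[i]]_n := psi *m adj psi.

Definition ptraceB (R : rcfType) (m n : nat) (X : 'M[R[i]]_(m * n)) : 'M[R[i]]_m :=
  \matrix_(a, a') \sum_(b < n) X (mxtens_index (a, b)) (mxtens_index (a', b)).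
Definition ptraceA (R : rcfType) (m n : nat) (X : 'M[R[i]]_(m * n)) : 'M[R[i]]_n :=
  \matrix_(b, b') \sum_(a < m) X (mxtens_index (a, b)) (mxtens_index (a, b')).

Definition max_entangled (R : rcfType) (psi : 'cV[R[i]]_(6 * 6)) : Prop :=
  adj psi *m psi = 1%:M /\
  ptraceB (proj psi) = (6%:R)^-1 *: 1%:M /\
  ptraceA (proj psi) = (6%:R)^-1 *: 1%:M.

(* Main.v *)
Require Import Defs.
From HB Require Import structures.
From mathcomp Require Import all_boot all_order all_algebra.
From mathcomp Require Import fingroup perm complex mxtens.
From mathcomp Require Import lra ring.
Import Order.TTheory GRing.Theory Num.Theory.
Local Open Scope ring_scope.
Local Open Scope complex_scope.

Section Adj.
Variable R : rcfType.
Local Notation C := R[i].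

Lemma cadj_mul m n p (A : 'M[C]_(m, n)) (B : 'M[C]_(n, p)) :
  adj (A *m B) = adj B *m adj A.
Proof. by rewrite /adj trmx_mul map_mxM. Qed.

Lemma cadjK m n (A : 'M[C]_(m, n)) : adj (adj A) = A.
Proof. by apply/matrixP => i j; rewrite /adj !mxE conjcK. Qed.

Lemma cadjD m n (A B : 'M[C]_(m, n)) : adj (A + B) = adj A + adj B.
Proof. by apply/matrixP => i j; rewrite /adj !mxE rmorphD. Qed.

Lemma cadjN m n (A : 'M[C]_(m, n)) : adj (- A) = - adj A.
Proof. by apply/matrixP => i j; rewrite /adj !mxE rmorphN. Qed.

Lemma cadjB m n (A B : 'M[C]_(m, n)) : adj (A - B) = adj A - adj B.
Proof. by rewrite cadjD cadjN. Qed.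

Lemma cadjZ m n (c : C) (A : 'M[C]_(m, n)) : adj (c *: A) = conjc c *: adj A.
Proof. by apply/matrixP => i j; rewrite /adj !mxE rmorphM. Qed.

Lemma cadj_sum m n I (r : seq I) (P : pred I) (F : I -> 'M[C]_(m, n)) :
  adj (\sum_(k <- r | P k) F k) = \sum_(k <- r | P k) adj (F k).
Proof.
elim/big_rec2: _ => [|k x y _ <-]; last by rewrite cadjD.
by apply/matrixP => i j; rewrite /adj !mxE conjc0.
Qed.

Lemma cadj_tens m n p q' (A : 'M[C]_(m, n)) (B : 'M[C]_(p, q')) :
  adj (A *t B) = adj A *t adj B.
Proof. by rewrite /adj trmx_tens map_mxT. Qed.

Lemma cadj_perm n (s : 'S_n) : adj (perm_mx s : 'M[C]_n) = perm_mx s^-1.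
Proof. by rewrite /adj tr_perm_mx map_perm_mx. Qed.

Lemma cadj1 n : adj (1%:M : 'M[C]_n) = 1%:M.
Proof. by apply/matrixP => i j; rewrite /adj !mxE rmorphMn rmorph1 eq_sym. Qed.

Lemma unitary_perm n (s : 'S_n) : adj (perm_mx s : 'M[C]_n) *m perm_mx s = 1%:M.
Proof. by rewrite cadj_perm -perm_mxM mulVg perm_mx1. Qed.

Lemma tens11 m n : (1%:M : 'M[C]_m) *t (1%:M : 'M[C]_n) = 1%:M.
Proof.
apply/matrixP => i j.
case: (mxtens_indexP i) => i1 i2; case: (mxtens_indexP j) => j1 j2.
rewrite tensmxE !mxE (can_eq (@mxtens_indexK m n)) xpair_eqE.
by case: (i1 == j1); case: (i2 == j2); rewrite /= ?mulr1 ?mulr0 ?mul0r.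
Qed.

Lemma unitary_tens m (K : 'M[C]_m) n :
  adj K *m K = 1%:M -> adj (K *t (1%:M : 'M[C]_n)) *m (K *t 1%:M) = 1%:M.
Proof. by move=> hK; rewrite cadj_tens tensmx_mul hK cadj1 mulmx1 tens11. Qed.

Lemma cadj_proj n (x : 'cV[C]_n) : adj (proj x) = proj x.
Proof. by rewrite /proj cadj_mul cadjK. Qed.

Lemma nrm_ge0 m n (y : 'M[C]_(m, n)) j : 0 <= (adj y *m y) j j.
Proof.
rewrite mxE; apply: sumr_ge0 => i _; rewrite /adj !mxE mulrC; exact: mulcJ_ge0.
Qed.

Lemma nrm_eq0 m (y : 'cV[C]_m) : (adj y *m y) 0 0 = 0 -> y = 0.
Proof.
rewrite mxE => /eqP; rewrite psumr_eq0 => [/allP H|i _]; last first.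
  by rewrite /adj !mxE mulrC; exact: mulcJ_ge0.
apply/matrixP => i j; rewrite [j]ord1 mxE.
have := H i (mem_index_enum _); rewrite /adj !mxE mulf_eq0 conjc_eq0.
by rewrite orbb => /eqP.
Qed.

End Adj.

Set Implicit Arguments.

Section Key.
Variable R : rcfType.
Local Notation C := R[i].

Lemma conjR (x : R) : (x%:C)^* = x%:C :> C.
Proof. by rewrite /= oppr0. Qed.

Definition ipm n (x : 'cV[C]_n) (X : 'M[C]_n) := (adj x *m (X *m x)) 0 0.

Lemma tr_proj n (x : 'cV[C]_n) (X : 'M[C]_n) : \tr (proj x *m X) = ipm x X.
Proof.
by rewrite /proj -mulmxA mxtrace_mulC /mxtrace big_ord1 /ipm mulmxA.
Qed.

Lemma trZ n (c : C) (A : 'M[C]_n) : \tr (c *: A) = c * \tr A.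
Proof. by rewrite /mxtrace mulr_sumr; apply: eq_bigr => i _; rewrite mxE. Qed.

Lemma trZl n (c : C) (A X : 'M[C]_n) : \tr ((c *: A) *m X) = c * \tr (A *m X).
Proof.
rewrite /mxtrace mulr_sumr; apply: eq_bigr => i _; rewrite !mxE mulr_sumr.
by apply: eq_bigr => j _; rewrite mxE mulrA.
Qed.

Lemma trB n (A B : 'M[C]_n) : \tr (A - B) = \tr A - \tr B.
Proof. by rewrite /mxtrace -sumrB; apply: eq_bigr => i _; rewrite !mxE. Qed.

Lemma tr_sum n I (r : seq I) (P : pred I) (F : I -> 'M[C]_n) :
  \tr (\sum_(k <- r | P k) F k) = \sum_(k <- r | P k) \tr (F k).
Proof.
elim/big_rec2: _ => [|k x y _ <-]; first by rewrite /mxtrace big1 // => i _; rewrite mxE.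
by rewrite /mxtrace -big_split; apply: eq_bigr => i _; rewrite mxE.
Qed.

Lemma tr_A n (c : 'I_3 -> C) (a b : 'I_3 -> 'cV[C]_n) (X : 'M[C]_n) :
  \tr ((\sum_k c k *: proj (a k) - \sum_k c k *: proj (b k)) *m X)
  = \sum_k c k * (ipm (a k) X - ipm (b k) X).
Proof.
rewrite mulmxBl !mulmx_suml trB !tr_sum -sumrB.
apply: eq_bigr => k _. rewrite !trZl !tr_proj; ring.
Qed.

Lemma unit_idm n (x : 'cV[C]_n) (W : 'M[C]_n) :
  adj x *m x = 1%:M -> adj W *m W = 1%:M ->
  (adj (W *m x - x) *m (W *m x - x)) 0 0 = 2 - ipm x (W + adj W).
Proof.
move=> hx hW.
rewrite cadjB cadj_mul mulmxBl !mulmxBr.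
have -> : adj x *m adj W *m (W *m x) = 1%:M.
  by rewrite -mulmxA (mulmxA (adj W)) hW mul1mx.
rewrite hx /ipm mulmxDl mulmxDr !mulmxA.
set a := adj x *m W *m x; set b := adj x *m adj W *m x.
rewrite !mxE /=; ring.
Qed.

Lemma unit_idp n (x : 'cV[C]_n) (W : 'M[C]_n) :
  adj x *m x = 1%:M -> adj W *m W = 1%:M ->
  (adj (W *m x + x) *m (W *m x + x)) 0 0 = 2 + ipm x (W + adj W).
Proof.
move=> hx hW.
rewrite cadjD cadj_mul mulmxDl !mulmxDr.
have -> : adj x *m adj W *m (W *m x) = 1%:M.
  by rewrite -mulmxA (mulmxA (adj W)) hW mul1mx.
rewrite hx /ipm mulmxDl mulmxDr !mulmxA.
rewrite !mxE /=; ring.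
Qed.

Lemma key n (q : 'I_3 -> R) (a b : 'I_3 -> 'cV[C]_n) (U V : 'M[C]_n) (d : 'rV[R]_n) :
  (forall k, 0 < q k) -> \sum_k q k = 1 ->
  (forall k, adj (a k) *m a k = 1%:M) -> (forall k, adj (b k) *m b k = 1%:M) ->
  (adj (a 0) *m b 0) 0 0 != 0 ->
  unitary U -> unitary V ->
  \sum_k (q k)%:C *: proj (a k) - \sum_k (q k)%:C *: proj (b k)
    = U *m diag_mx (map_mx (fun x : R => x%:C) d) *m V ->
  \sum_j d 0 j < 2.
Proof.
move=> hq hsum ha hb hab [hU1 hU2] [hV1 hV2] hA.
set A := _ - _ in hA; set D := diag_mx _ in hA.
set T := \sum_j d 0 j.
have hD : D = adj U *m A *m adj V.
  by rewrite hA !mulmxA hU2 mul1mx -mulmxA hV1 mulmx1.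
have htr : T%:C = \tr D.
  by rewrite mxtrace_diag rmorph_sum; apply: eq_bigr => j _; rewrite mxE.
have hDadj : adj D = D.
  apply/matrixP => i j; rewrite /adj !mxE.
  case: (eqVneq i j) => [->|nij]; first by rewrite !mulr1n conjc_real.
  by rewrite !mulr0n conjc0.
have hAadj : adj A = A.
  rewrite /A cadjB !cadj_sum; congr (_ - _); apply: eq_bigr => k _;
  rewrite cadjZ conjR cadj_proj //.
set W := adj V *m adj U.
have h1 : \tr D = \tr (A *m W).
  by rewrite hD -mulmxA mxtrace_mulC /W !mulmxA.
have h2 : \tr D = \tr (A *m adj W).
  rewrite -{1}hDadj hD !cadj_mul !cadjK hAadj /W.
  by rewrite mxtrace_mulC !mulmxA.
have hW : adj W *m W = 1%:M.
  by rewrite /W cadj_mul !cadjK !mulmxA -(mulmxA U) hV1 mulmx1 hU1.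
clearbody W.
set Y := W + adj W.
have h3 : T%:C * 2 = \sum_k (q k)%:C * (ipm (a k) Y - ipm (b k) Y).
  by rewrite -tr_A -/A /Y mulmxDr mxtraceD -h1 -h2 htr; ring.
set ne := fun k => (adj (W *m a k - a k) *m (W *m a k - a k)) 0 0.
set nf := fun k => (adj (W *m b k + b k) *m (W *m b k + b k)) 0 0.
have h4 : T%:C * 2 = 4 - \sum_k (q k)%:C * (ne k + nf k).
  have -> : 4 = \sum_k (q k)%:C * 4 :> C.
    by rewrite -mulr_suml -rmorph_sum hsum rmorph1 mul1r.
  rewrite h3 -sumrB; apply: eq_bigr => k _.
  rewrite /ne /nf unit_idm // unit_idp //; ring.
have hn0 : ne 0 + nf 0 != 0.
  apply/negP; rewrite paddr_eq0 ?nrm_ge0 // => /andP [/eqP he /eqP hf].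
  move: he => /nrm_eq0 /eqP; rewrite subr_eq0 => /eqP hWa.
  move: hf => /nrm_eq0 /eqP; rewrite addr_eq0 => /eqP hWb.
  have hz : adj (a 0) *m b 0 = - (adj (a 0) *m b 0).
    rewrite -{1}(mulmx1 (adj (a 0))) -hW !mulmxA -cadj_mul hWa -mulmxA hWb.
    by rewrite mulmxN.
  have hz0 : (adj (a 0) *m b 0) 0 0 = - (adj (a 0) *m b 0) 0 0.
    by rewrite {1}hz mxE.
  move: hab hz0; set z := (adj (a 0) *m b 0) 0 0 => hab hz0.
  move/eqP: hz0; rewrite -addr_eq0 -mulr2n mulrn_eq0 /=.
  by rewrite (negPf hab).
have hP : 0 < \sum_k (q k)%:C * (ne k + nf k).
  rewrite (bigD1 0) //=; rewrite -[X in X < _]addr0; apply: ltr_leD.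
    apply: mulr_gt0; first by rewrite ltcR.
    by rewrite lt_def hn0 addr_ge0 ?nrm_ge0.
  apply: sumr_ge0 => k _; apply: mulr_ge0; first by rewrite lecR ltW.
  by rewrite addr_ge0 ?nrm_ge0.
have h5 : (4 - T * 2)%:C = \sum_k (q k)%:C * (ne k + nf k).
  by rewrite rmorphB /= rmorphM /= !rmorph_nat h4; ring.
move: hP; rewrite -h5 -(rmorph0 (real_complex R)) ltcR => hP.
lra.
Qed.
End Key.


Section Tens.
Variable R : rcfType.
Local Notation C := R[i].

Lemma sum_tens m n (F : 'I_(m * n) -> C) :
  \sum_(x < m * n) F x = \sum_(i < m) \sum_(j < n) F (mxtens_index (i, j)).
Proof.
rewrite pair_big /= (reindex (@mxtens_index m n)) /=.
  by apply: eq_bigr => -[i j].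
by exists (@mxtens_unindex m n) => x _; rewrite (mxtens_indexK, mxtens_unindexK).
Qed.

Lemma ip_tens m n (K : 'M[C]_m) (psi : 'cV[C]_(m * n)) :
  (adj psi *m ((K *t (1%:M : 'M[C]_n)) *m psi)) 0 0
  = \tr (K *m ptraceB (proj psi)).
Proof.
rewrite mxE sum_tens /mxtrace; apply: eq_bigr => i _.
transitivity (\sum_(j < n) \sum_(k < m) (psi (mxtens_index (i, j)) 0)^* * (K i k * psi (mxtens_index (k, j)) 0)).
  apply: eq_bigr => j _; rewrite /adj !mxE sum_tens mulr_sumr; apply: eq_bigr => k _.
  rewrite (bigD1 j) //= big1 => [|l /negPf hl]; last by rewrite tensmxE mxE eq_sym hl mulr0n mulr0 mul0r.
  by rewrite tensmxE !mxE eqxx mulr1n mulr1 addr0.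
rewrite mxE exchange_big /=; apply: eq_bigr => k _.
rewrite mxE mulr_sumr; apply: eq_bigr => j _.
rewrite /proj mxE big_ord1 /adj !mxE; ring.
Qed.

End Tens.


Section Conc.
Variable R : rcfType.
Local Notation C := R[i].

Lemma sum3 (V : zmodType) (F : 'I_3 -> V) :
  \sum_(k < 3) F k = F (inord 0) + F (inord 1) + F (inord 2).
Proof.
rewrite !big_ord_recr big_ord0 /= add0r.
by congr (F _ + F _ + F _); apply: val_inj; rewrite /= inordK.
Qed.

Lemma sum6 (V : zmodType) (F : 'I_6 -> V) :
  \sum_(k < 6) F k = F (inord 0) + F (inord 1) + F (inord 2)
                    + F (inord 3) + F (inord 4) + F (inord 5).
Proof.
rewrite !big_ord_recr big_ord0 /= add0r.
by congr (F _ + F _ + F _ + F _ + F _ + F _); apply: val_inj; rewrite /= inordK.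
Qed.

Lemma perm_entry n (s : 'S_n) i j : (perm_mx s : 'M[C]_n) i j = (s i == j)%:R.
Proof. by rewrite /perm_mx !mxE. Qed.

Lemma swap_delta (j : 'I_6) : swap6 R j *m (delta_mx 0 0 : 'cV[C]_6) = delta_mx j 0.
Proof.
apply/matrixP => i k; rewrite /swap6 -row_permE !mxE.
by rewrite (canF_eq (tpermK 0 j)) tpermL.
Qed.

Lemma cadj_delta m n (i : 'I_m) (j : 'I_n) :
  adj (delta_mx i j : 'M[C]_(m, n)) = delta_mx j i.
Proof.
by apply/matrixP => a b; rewrite /adj !mxE andbC; case: (_ && _); rewrite ?rmorph0 ?rmorph1.
Qed.

Lemma proj_delta n (j : 'I_n) : proj (delta_mx j 0 : 'cV[C]_n) = delta_mx j j.
Proof. by rewrite /proj cadj_delta mul_delta_mx. Qed.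

Lemma L0 : Lbar R 0 = 1%:M.
Proof.
rewrite /Lbar /swap6.
have -> : (inord (nat_of_ord (0%R : 'I_3)) : 'I_6) = 0 by apply: val_inj; rewrite /= inordK.
by rewrite tperm1 perm_mx1.
Qed.

Lemma tr_swap3 : \tr (swap6 R (inord 3)) != 0.
Proof.
rewrite /mxtrace (eq_bigr (fun i => ((tperm 0 (inord 3) i == i) : nat)%:R)); last first.
  by move=> i _; rewrite /swap6 perm_entry.
rewrite -natr_sum pnatr_eq0 -lt0n (bigD1 (inord 1)) //=.
rewrite tpermD ?eqxx //.
  by rewrite -val_eqE /= inordK.
by rewrite -val_eqE /= !inordK.
Qed.

End Conc.


Section Ent.
Variable R : rcfType.
Local Notation C := R[i].

Lemma mix_tens (q : 'I_3 -> R) (K : 'I_3 -> 'M[C]_6) (psi : 'cV[C]_(6 * 6)) :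
  mixunitary_tens_id q K (proj psi)
  = \sum_k (q k)%:C *: proj ((K k *t (1%:M : 'M[C]_6)) *m psi).
Proof. by apply: eq_bigr => k _; rewrite /proj cadj_mul !mulmxA. Qed.

Lemma unit_vec n (M : 'M[C]_n) (x : 'cV[C]_n) :
  adj M *m M = 1%:M -> adj x *m x = 1%:M -> adj (M *m x) *m (M *m x) = 1%:M.
Proof.
by move=> hM hx; rewrite cadj_mul -mulmxA (mulmxA (adj M)) hM mul1mx.
Qed.

Lemma ent_bound (q : 'I_3 -> R) (hq : forall k, 0 < q k < 1)
  (hsum : \sum_(k < 3) q k = 1) (psi : 'cV[C]_(6 * 6)) :
  max_entangled psi -> forall t' : R,
  trace_norm_is (mixunitary_tens_id q (@Lbar R) (proj psi)
                 - mixunitary_tens_id q (@Sbar R) (proj psi)) t' -> t' < 2.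
Proof.
move=> [hp1 [hp2 _]] t' [U [V [d [hU hV _ hA ->]]]].
rewrite !mix_tens in hA.
apply: (@key R (6 * 6) q (fun k => (Lbar R k *t (1%:M : 'M[C]_6)) *m psi)
  (fun k => (Sbar R k *t (1%:M : 'M[C]_6)) *m psi) U V d _ hsum _ _ _ hU hV hA).
- by move=> k; case/andP: (hq k).
- move=> k; apply: unit_vec => //; apply: unitary_tens.
  exact: unitary_perm.
- move=> k; apply: unit_vec => //; apply: unitary_tens.
  exact: unitary_perm.
rewrite L0 tens11 mul1mx ip_tens hp2 -scalemxAr mulmx1 trZ.
rewrite mulf_neq0 // ?invr_eq0 ?pnatr_eq0 //.
exact: tr_swap3.
Qed.

End Ent.


Section Single.
Variable R : rcfType.
Local Notation C := R[i].

Lemma mix_single (q : 'I_3 -> R) (K : 'I_3 -> 'M[C]_6) (e : 'cV[C]_6) :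
  mixunitary q K (proj e) = \sum_k (q k)%:C *: proj (K k *m e).
Proof. by apply: eq_bigr => k _; rewrite /proj cadj_mul !mulmxA. Qed.

Lemma density_e0 : density (proj (delta_mx 0 0 : 'cV[C]_6)).
Proof.
split; first exact: cadj_proj.
split.
  move=> v; set e := delta_mx _ _.
  have -> : adj v *m proj e *m v = adj (adj e *m v) *m (adj e *m v).
    by rewrite cadj_mul cadjK /proj !mulmxA.
  exact: nrm_ge0.
rewrite proj_delta /mxtrace (bigD1 0) //= big1 ?mxE ?eqxx ?addr0 //.
by move=> i /negPf hi; rewrite mxE hi.
Qed.

End Single.


Theorem theorem9 (R : rcfType) (q : 'I_3 -> R)
  (hq : forall k, 0 < q k < 1) (hsum : \sum_(k < 3) q k = 1) :
  exists rho : 'M[R[i]]_6, density rho /\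
    exists t : R,
      trace_norm_is (mixunitary q (@Lbar R) rho - mixunitary q (@Sbar R) rho) t /\
      forall psi : 'cV[R[i]]_(6 * 6), max_entangled psi ->
      forall t' : R,
        trace_norm_is (mixunitary_tens_id q (@Lbar R) (proj psi)
                       - mixunitary_tens_id q (@Sbar R) (proj psi)) t' ->
        1 / 2 + 1 / 4 * t' < 1 / 2 + 1 / 4 * t.
Proof.
exists (proj (delta_mx 0 0 : 'cV[R[i]]_6)); split; first exact: density_e0.
exists 2; split; last first.
  move=> psi hpsi t' ht; have := ent_bound hq hsum hpsi ht; lra.
set u := \row_(j < 6) (if (j < 3)%N then 1 else -1 : R[i]).
set d := \row_(j < 6) nth 0 [:: q (inord 0); q (inord 1); q (inord 2);
                                q (inord 0); q (inord 1); q (inord 2)] j.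
rewrite sum3 in hsum.
exists (diag_mx u), 1%:M, d; split.
- have hu : adj (diag_mx u) = diag_mx u.
    apply/matrixP => i j; rewrite /adj !mxE.
    case: (eqVneq i j) => [->|nij]; last by rewrite !mulr0n rmorph0.
    by rewrite !mulr1n; case: ifP => _; rewrite ?rmorph1 ?rmorphN1.
  have hu2 : diag_mx u *m diag_mx u = 1%:M.
    rewrite mulmx_diag -diag_const_mx; congr diag_mx; apply/rowP => j.
    by rewrite !mxE; case: ifP => _; rewrite ?mulr1 ?mulN1r ?opprK.
  by split; rewrite hu.
- by split; rewrite cadj1 mul1mx.
- move=> j; rewrite mxE.
  have hq0 : forall k, 0 <= q k by move=> k; have /andP[/ltW] := hq k.
  by case: j => [[|[|[|[|[|[|//]]]]]] ?] /=.
- rewrite mulmx1 mulmx_diag diag_mx_sum_delta sum6 !mxE !inordK //=.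
  rewrite !mix_single !sum3 /Lbar /Sbar !swap_delta !proj_delta !inordK //=.
  have -> : (0 + 3 = 3)%N by []. have -> : (1 + 3 = 4)%N by [].
  have -> : (2 + 3 = 5)%N by [].
  by rewrite !mul1r !mulN1r !scaleNr !opprD !addrA.
- rewrite sum6 !mxE !inordK //=; lra.
Qed.
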